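(* The map $a\mapsto(a,\,a\bar a^* )$ induces an isomorphism of algebraic groups over $\mathbf Q$ $$E_0^\times/F^\times\;\xrightarrow{\ \sim\ }\;H_{\mathbf z}.$$
   Context: $D_0$ is a definite quaternion algebra over $\mathbf Q$ with main involution $*$; $F=\mathbf Q(\sqrt{d_F})$ is a quadratic étale algebra ($d_F$ a square-free positive integer, with $d_F=1$ meaning $F=\mathbf Q\oplus\mathbf Q$) with nontrivial automorphism $x\mapsto\bar x$; $D=D_0\otimes_{\mathbf Q}F$ with $*$ and $\bar{\ }$ extended; $V=\{x\in D:\bar x^*=x\}$; $H(\mathbf Q)=(D^\times\times\mathbf Q^\times)/\{(a,N_{F/\mathbf Q}(a)):a\in F^\times\}$ acts on $V$ by $\varrho(a,\alpha)x=\alpha^{-1}ax\bar a^*$, with similitude $\nu=\alpha^{-2}N_{F/\mathbf Q}(aa^* )$, and $H^{(1)}=\ker\nu$. $M=\mathbf Q(\sqrt{-d_M})$ is an imaginary quadratic field ($d_M$ square-free positive) with an embedding $\iota:M\hookrightarrow D_0$. $K=\mathbf Q(\sqrt{-d_Md_F})$, embedded in $V$ by $\iota(\sqrt{-d_Md_F})=\iota(\sqrt{-d_M})\otimes\sqrt{d_F}$. With $-d_K$ the square-free integer such that $K=\mathbf Q(\sqrt{-d_K})$, put $\delta=\sqrt{-d_K}$ if $-d_K\not\equiv1\pmod 4$ and $\delta=\frac{1+\sqrt{-d_K}}{2}$ otherwise; $\mathbf z=(1,\iota(\delta))\in V\oplus V$. $E=F\cdot\iota(M)\subset D$ (the subalgebra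 generated by $F$ and $\iota(M)$), $N_{E/K}(a)=a\bar a^*$, $E_0=\{a\in E:a\bar a^*\in\mathbf Q\}$ (as an algebraic group, $E_0^\times$ is the group of units $a$ of $E$ with $a\bar a^*$ in $\mathbf G_m$), and $H_{\mathbf z}=\{h\in H^{(1)}:\varrho(h)\mathbf z=\mathbf z\}$ with $\varrho$ acting componentwise. *)

(* Defs.v *)
From HB Require Import structures.
From mathcomp Require Import all_boot all_order all_algebra.
Set Implicit Arguments. Unset Strict Implicit. Unset Printing Implicit Defensive.
Import Order.TTheory GRing.Theory Num.Theory.
Local Open Scope ring_scope.

Definition squarefree (n : nat) : Prop :=
  (0 < n)%N /\ forall p : nat, prime p -> ~~ (p * p %| n)%N.

(* Quaternion algebra (a,b)_L with basis 1,i,j,k: i^2=a, j^2=b, k=ij=-ji. *)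
Record quat (L : Type) := Quat { q0 : L; q1 : L; q2 : L; q3 : L }.

Definition qmap (L : unitRingType) (x : quat rat) : quat L :=
  Quat (ratr (q0 x)) (ratr (q1 x)) (ratr (q2 x)) (ratr (q3 x)).

Section Algebras.
Variable L : fieldType.
(* qa, qb : structure constants of D_0; dF : d_F; mu : iota(sqrt(-d_M)) *)
Variables (qa qb dF : L) (mu : quat L).

Definition qadd (x y : quat L) : quat L :=
  Quat (q0 x + q0 y) (q1 x + q1 y) (q2 x + q2 y) (q3 x + q3 y).
Definition qscal (c : L) (x : quat L) : quat L :=
  Quat (c * q0 x) (c * q1 x) (c * q2 x) (c * q3 x).
Definition qopp (x : quat L) : quat L := qscal (-1) x.
Definition qone : quat L := Quat 1 0 0 0.
Definition qzero : quat L := Quat 0 0 0 0.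
Definition qmul (x y : quat L) : quat L :=
  Quat (q0 x * q0 y + qa * q1 x * q1 y + qb * q2 x * q2 y - qa * qb * q3 x * q3 y)
       (q0 x * q1 y + q1 x * q0 y - qb * q2 x * q3 y + qb * q3 x * q2 y)
       (q0 x * q2 y + q2 x * q0 y + qa * q1 x * q3 y - qa * q3 x * q1 y)
       (q0 x * q3 y + q3 x * q0 y + q1 x * q2 y - q2 x * q1 y).
Definition qconj (x : quat L) : quat L := Quat (q0 x) (- q1 x) (- q2 x) (- q3 x).

(* D_L = D_0 (x) F (x) L : elements x + y s, s^2 = d_F central. *)
Record dq := DQ { dre : quat L; dim : quat L }.

Definition dadd (x y : dq) : dq := DQ (qadd (dre x) (dre y)) (qadd (dim x) (dim y)).
Definition dmul (x y : dq) : dq :=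
  DQ (qadd (qmul (dre x) (dre y)) (qscal dF (qmul (dim x) (dim y))))
     (qadd (qmul (dre x) (dim y)) (qmul (dim x) (dre y))).
Definition dscal (c : L) : dq := DQ (Quat c 0 0 0) qzero.
Definition dsmul (c : L) (x : dq) : dq := DQ (qscal c (dre x)) (qscal c (dim x)).
Definition done : dq := dscal 1.
Definition dstar (x : dq) : dq := DQ (qconj (dre x)) (qconj (dim x)).
(* x |-> \bar x  (nontrivial automorphism of F extended) *)
Definition dbar (x : dq) : dq := DQ (dre x) (qopp (dim x)).
Definition dbarstar (x : dq) : dq := dbar (dstar x).
(* element u + v sqrt(d_F) of F (x) L *)
Definition fel (u v : L) : dq := DQ (Quat u 0 0 0) (Quat v 0 0 0).
Definition normF (u v : L) : L := u ^+ 2 - dF * v ^+ 2.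

Definition dunit (g : dq) : Prop := exists h, dmul g h = done /\ dmul h g = done.

(* reduced norm g g^* in F (x) L, as coordinates (u,v) of u + v sqrt(d_F) *)
Definition nrd_u (g : dq) : L := q0 (dre (dmul g (dstar g))).
Definition nrd_v (g : dq) : L := q0 (dim (dmul g (dstar g))).

(* representatives (g, alpha) of H(L) = (D_L^x * L^x) / F_L^x *)
Definition Hrep_ok (h : dq * L) : Prop := dunit h.1 /\ h.2 != 0.
(* equality in H(L): (g',a') = (t g, N(t) a) for some t in F_L^x *)
Definition Hequiv (h h' : dq * L) : Prop :=
  exists u v, normF u v != 0 /\ h'.1 = dmul (fel u v) h.1 /\ h'.2 = normF u v * h.2.
Definition nu (h : dq * L) : L := h.2 ^- 2 * normF (nrd_u h.1) (nrd_v h.1).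
Definition rho (h : dq * L) (x : dq) : dq :=
  dsmul (h.2)^-1 (dmul (dmul h.1 x) (dbarstar h.1)).

(* E = F . iota(M) *)
Definition inE (g : dq) : Prop :=
  exists u1 v1 u2 v2, g = dadd (fel u1 v1) (dmul (fel u2 v2) (DQ mu qzero)).
Definition E0x (g : dq) : Prop :=
  inE g /\ (exists h, inE h /\ dmul g h = done /\ dmul h g = done) /\
  (exists c : L, c != 0 /\ dmul g (dbarstar g) = dscal c).
Definition Nalpha (g : dq) : L := q0 (dre (dmul g (dbarstar g))).

End Algebras.

(* iota(sqrt(-d_K)) = c^-1 iota(sqrt(-d_M)) (x) sqrt(d_F), where d_M d_F = c^2 d_K *)
Definition iota_sqrtdK (L : fieldType) (c : nat) (mu : quat L) : dq L :=
  DQ (qzero L) (qscal (c%:R)^-1 mu).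
Definition iota_delta (L : fieldType) (dK c : nat) (mu : quat L) : dq L :=
  if (dK %% 4 == 3)%N   (* -d_K = 1 mod 4 *)
  then dsmul (2%:R)^-1 (dadd (done L) (iota_sqrtdK c mu))
  else iota_sqrtdK c mu.

Definition Hz (L : fieldType) (qa qb dF : L) (dK c : nat) (mu : quat L) (h : dq L * L) : Prop :=
  Hrep_ok qa qb dF h /\ nu qa qb dF h = 1 /\
  rho qa qb dF h (done L) = done L /\
  rho qa qb dF h (iota_delta dK c mu) = iota_delta dK c mu.

(* Main.v *)
Require Import Defs.
From HB Require Import structures.
From mathcomp Require Import all_boot all_order all_algebra.
From mathcomp Require Import ring lra zify.
Import Order.TTheory GRing.Theory Num.Theory.
Local Open Scope ring_scope.

Lemma dq_ext (L : fieldType) (x y : dq L) :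
  q0 (dre x) = q0 (dre y) -> q1 (dre x) = q1 (dre y) -> q2 (dre x) = q2 (dre y) -> q3 (dre x) = q3 (dre y) ->
  q0 (Defs.dim x) = q0 (Defs.dim y) -> q1 (Defs.dim x) = q1 (Defs.dim y) -> q2 (Defs.dim x) = q2 (Defs.dim y) -> q3 (Defs.dim x) = q3 (Defs.dim y) -> x = y.
Proof. by case: x => [[????] [????]]; case: y => [[????] [????]] /= -> -> -> -> -> -> -> ->. Qed.

Ltac dsolve := apply: dq_ext => /=; ring.
Ltac dd x := case: x => [[????] [????]].

Lemma eq_comb {L : fieldType} {A B X : L} : A = B -> X = A - B -> X = 0.
Proof. by move=> -> ->; rewrite subrr. Qed.

Section S.
Variable L : fieldType.
Variables (qa qb f m1 m2 m3 : L).
Let m : quat L := Quat 0 m1 m2 m3.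
Implicit Types (x y z g : dq L) (c d u v : L).

Notation dm := (dmul qa qb f).
Definition e (u1 v1 u2 v2 : L) : dq L :=
  DQ (Quat u1 (u2 * m1) (u2 * m2) (u2 * m3)) (Quat v1 (v2 * m1) (v2 * m2) (v2 * m3)).

Lemma dmulA x y z : dm x (dm y z) = dm (dm x y) z.
Proof. dd x; dd y; dd z; dsolve. Qed.
Lemma dbarstarM x y : dbarstar (dm x y) = dm (dbarstar y) (dbarstar x).
Proof. dd x; dd y; dsolve. Qed.
Lemma dmulx1 x : dm x (done L) = x.
Proof. dd x; dsolve. Qed.
Lemma dmul1x x : dm (done L) x = x.
Proof. dd x; dsolve. Qed.
Lemma dmulfel10 x : dm (fel 1 0) x = x.
Proof. dd x; dsolve. Qed.
Lemma dmulZl c x y : dm (dsmul c x) y = dsmul c (dm x y).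
Proof. dd x; dd y; dsolve. Qed.
Lemma dmulZr c x y : dm x (dsmul c y) = dsmul c (dm x y).
Proof. dd x; dd y; dsolve. Qed.
Lemma dmulscal c x : dm x (dscal c) = dsmul c x.
Proof. dd x; dsolve. Qed.
Lemma dsmulZ c d x : dsmul c (dsmul d x) = dsmul (c * d) x.
Proof. dd x; dsolve. Qed.
Lemma dsmul1 x : dsmul 1 x = x.
Proof. dd x; dsolve. Qed.
Lemma dsmul_done c : dsmul c (done L) = dscal c.
Proof. dsolve. Qed.
Lemma dsmulscal c d : dsmul c (dscal d) = dscal (c * d).
Proof. dsolve. Qed.
Lemma dsmulK c x : c != 0 -> dsmul c^-1 (dsmul c x) = x.
Proof. by move=> cnz; rewrite dsmulZ mulVf // dsmul1. Qed.
Lemma dsmulK' c x : c != 0 -> dsmul c (dsmul c^-1 x) = x.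
Proof. by move=> cnz; rewrite dsmulZ mulfV // dsmul1. Qed.

Lemma inE_e g : Defs.inE qa qb f m g <-> exists u1 v1 u2 v2, g = e u1 v1 u2 v2.
Proof.
split=> -[u1 [v1 [u2 [v2 ->]]]]; exists u1, v1, u2, v2; dsolve.
Qed.

Lemma e_comm u1 v1 u2 v2 w1 w2 w3 w4 :
  dm (e u1 v1 u2 v2) (e w1 w2 w3 w4) = dm (e w1 w2 w3 w4) (e u1 v1 u2 v2).
Proof. dsolve. Qed.

Let N := qa * m1 ^+ 2 + qb * m2 ^+ 2 - qa * qb * m3 ^+ 2.

Lemma e_mul u1 v1 u2 v2 w1 w2 w3 w4 :
  dm (e u1 v1 u2 v2) (e w1 w2 w3 w4) =
  e (u1 * w1 + f * v1 * w2 + N * u2 * w3 + f * N * v2 * w4)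
    (u1 * w2 + v1 * w1 + N * (u2 * w4 + v2 * w3))
    (u1 * w3 + u2 * w1 + f * (v1 * w4 + v2 * w2))
    (u1 * w4 + v2 * w1 + v1 * w3 + u2 * w2).
Proof. rewrite /N; dsolve. Qed.

Lemma Nalpha_fel u v x :
  dm (dm (fel u v) x) (dbarstar (dm (fel u v) x)) = dsmul (normF f u v) (dm x (dbarstar x)).
Proof. dd x; rewrite /normF; dsolve. Qed.

Definition Wform (w : dq L) : L :=
  q0 (dre w) ^+ 2 + f * q0 (Defs.dim w) ^+ 2
  - (qa * q1 (dre w) ^+ 2 + qb * q2 (dre w) ^+ 2 - qa * qb * q3 (dre w) ^+ 2)
  - f * (qa * q1 (Defs.dim w) ^+ 2 + qb * q2 (Defs.dim w) ^+ 2 - qa * qb * q3 (Defs.dim w) ^+ 2).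

Lemma nuE u1 v1 u2 v2 (g := e u1 v1 u2 v2) :
  normF f (nrd_u qa qb f g) (nrd_v qa qb f g) = Wform (dm g (dbarstar g)).
Proof. rewrite /g /Wform /normF /nrd_u /nrd_v /=; ring. Qed.


Lemma mul_eq0_nz {k X : L} : k != 0 -> k * X = 0 -> X = 0.
Proof. by move=> knz /eqP; rewrite mulf_eq0 (negbTE knz) /= => /eqP. Qed.

Hypothesis mnz : [|| m1 != 0, m2 != 0 | m3 != 0].
Hypotheses (qanz : qa != 0) (qbnz : qb != 0) (fnz : f != 0) (twonz : 2 != 0 :> L).

Lemma cent a1 a2 a3 : a1 * m2 - a2 * m1 = 0 -> a1 * m3 - a3 * m1 = 0 ->
  a3 * m2 - a2 * m3 = 0 -> exists t, a1 = t * m1 /\ a2 = t * m2 /\ a3 = t * m3.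
Proof.
move=> /subr0_eq P1 /subr0_eq P2 /subr0_eq P3.
case/or3P: mnz => mz.
- exists (a1 / m1); split; first by rewrite divfK.
  by split; apply: (mulIf mz); rewrite mulrAC divfK //; apply/esym.
- exists (a2 / m2); split; last split; last 1 first.
  + by apply: (mulIf mz); rewrite mulrAC divfK //; apply/esym.
  + by apply: (mulIf mz); rewrite mulrAC divfK //; apply/esym.
  + by rewrite divfK.
- exists (a3 / m3); split; last split.
  + by apply: (mulIf mz); rewrite mulrAC divfK //; apply/esym.
  + by apply: (mulIf mz); rewrite mulrAC divfK //; apply/esym.
  + by rewrite divfK.
Qed.

Lemma commE (w1 w4 : L) z : w4 != 0 -> dm z (e w1 0 0 w4) = dm (e w1 0 0 w4) z ->
  Defs.inE qa qb f m z.
Proof.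
case: z => [[x0 x1 x2 x3] [y0 y1 y2 y3]] w4nz H.
have Ex1 := congr1 (fun t => q1 (Defs.dim t)) H.
have Ex2 := congr1 (fun t => q2 (Defs.dim t)) H.
have Ex3 := congr1 (fun t => q3 (Defs.dim t)) H.
have Ey1 := congr1 (fun t => q1 (dre t)) H.
have Ey2 := congr1 (fun t => q2 (dre t)) H.
have Ey3 := congr1 (fun t => q3 (dre t)) H.
simpl in Ex1, Ex2, Ex3, Ey1, Ey2, Ey3.
have k1 : 2 * w4 != 0 by rewrite mulf_neq0.
have k2 : 2 * w4 * f != 0 by rewrite !mulf_neq0.
have [tx [hx1 [hx2 hx3]]] : exists t, x1 = t * m1 /\ x2 = t * m2 /\ x3 = t * m3.
  apply: cent.
  - apply: (mul_eq0_nz k1); apply: (eq_comb Ex3); ring.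
  - apply: (mul_eq0_nz (mulf_neq0 k1 qanz)); apply: (eq_comb Ex2); ring.
  - apply: (mul_eq0_nz (mulf_neq0 k1 qbnz)); apply: (eq_comb Ex1); ring.
have [ty [hy1 [hy2 hy3]]] : exists t, y1 = t * m1 /\ y2 = t * m2 /\ y3 = t * m3.
  apply: cent.
  - apply: (mul_eq0_nz k2); apply: (eq_comb Ey3); ring.
  - apply: (mul_eq0_nz (mulf_neq0 k2 qanz)); apply: (eq_comb Ey2); ring.
  - apply: (mul_eq0_nz (mulf_neq0 k2 qbnz)); apply: (eq_comb Ey1); ring.
apply/inE_e; exists x0, y0, tx, ty.
by rewrite /e hx1 hx2 hx3 hy1 hy2 hy3.
Qed.


Lemma inv_comm g h' (t : dq L) : dm g h' = done L -> dm h' g = done L ->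
  dm g t = dm t g -> dm h' t = dm t h'.
Proof.
move=> gh hg gd.
have -> : dm h' t = dm (dm h' t) (dm g h') by rewrite gh dmulx1.
by rewrite dmulA -(dmulA h' t g) -gd dmulA hg dmul1x.
Qed.

Lemma scal_prod g g' c c' : dm g (dbarstar g) = dscal c ->
  dm g' (dbarstar g') = dscal c' ->
  dm (dm g g') (dbarstar (dm g g')) = dscal (c * c').
Proof.
move=> hg hg'.
rewrite dbarstarM dmulA -(dmulA g g') hg' dmulscal dmulZl hg dsmulscal.
by rewrite mulrC.
Qed.

Lemma main (dK cc : nat) (w1 w4 : L) :
  w4 != 0 -> iota_delta dK cc m = e w1 0 0 w4 ->
  let phi (g : dq L) : dq L * L := (g, Nalpha qa qb f g) in
  (forall g, E0x qa qb f m g -> Hz qa qb f dK cc m (phi g)) /\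
  (forall g g', E0x qa qb f m g -> E0x qa qb f m g' ->
     E0x qa qb f m (dmul qa qb f g g') /\
     Nalpha qa qb f (dmul qa qb f g g') = Nalpha qa qb f g * Nalpha qa qb f g') /\
  (forall g g', E0x qa qb f m g -> E0x qa qb f m g' ->
     (Hequiv qa qb f (phi g) (phi g') <->
      exists u v, normF f u v != 0 /\ g' = dmul qa qb f (fel u v) g)) /\
  (forall h, Hz qa qb f dK cc m h -> exists g, E0x qa qb f m g /\ Hequiv qa qb f (phi g) h).
Proof.
move=> w4nz hdelta phi.
have NalphaE g c : dm g (dbarstar g) = dscal c -> Nalpha qa qb f g = c.
  by rewrite /Nalpha => ->.
split; last split; last split.
-
  move=> g [hE [[h [hEh [gh hg]]] [c0 [c0nz hc0]]]].
  have hN := NalphaE _ _ hc0.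
  have [u1 [v1 [u2 [v2 ge]]]] := (inE_e g).1 hE.
  split; [split; [by exists h | by rewrite /phi /= hN] | split; [|split]].
  + rewrite /nu /phi /= hN ge nuE -ge hc0 /Wform /=.
    have -> : c0 ^+ 2 + f * 0 ^+ 2 - (qa * 0 ^+ 2 + qb * 0 ^+ 2 - qa * qb * 0 ^+ 2) -
       f * (qa * 0 ^+ 2 + qb * 0 ^+ 2 - qa * qb * 0 ^+ 2) = c0 ^+ 2 by ring.
    by rewrite mulVf // expf_neq0.
  + by rewrite /rho /phi /= hN dmulx1 hc0 -dsmul_done dsmulK.
  + rewrite /rho /phi /= hN hdelta ge e_comm -dmulA -ge hc0 dmulscal dsmulK //.
-
  move=> g g' [hE [[h [hEh [gh hg]]] [c0 [c0nz hc0]]]]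
              [hE' [[h' [hEh' [gh' hg']]] [c1 [c1nz hc1]]]].
  have hp := scal_prod _ _ _ _ hc0 hc1.
  rewrite (NalphaE _ _ hp) (NalphaE _ _ hc0) (NalphaE _ _ hc1).
  split=> //; split; last split; last by exists (c0 * c1); rewrite mulf_neq0.
  + have [u1 [v1 [u2 [v2 ->]]]] := (inE_e g).1 hE.
    have [w1' [w2' [w3' [w4' ->]]]] := (inE_e g').1 hE'.
    by apply/inE_e; rewrite e_mul; do 4 eexists.
  + exists (dm h' h); split; last split.
    * have [u1 [v1 [u2 [v2 ->]]]] := (inE_e h').1 hEh'.
      have [w1' [w2' [w3' [w4' ->]]]] := (inE_e h).1 hEh.
      by apply/inE_e; rewrite e_mul; do 4 eexists.
    * by rewrite !dmulA -(dmulA g g' h') gh' dmulx1 gh.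
    * by rewrite !dmulA -(dmulA h' h g) hg dmulx1 hg'.
-
  move=> g g' _ _; split.
  + by move=> [u [v [nz [h1 _]]]]; exists u, v.
  + move=> [u [v [nz ->]]]; exists u, v; split=> //; split=> //=.
    by rewrite /Nalpha Nalpha_fel.
-
  move=> [g al] [[[h' [gh hg]] alnz] [_ [r1 rd]]].
  rewrite /rho /= in r1 rd.
  rewrite dmulx1 in r1.
  have W : dm g (dbarstar g) = dscal al.
    by rewrite -(dsmulK' al (dm g (dbarstar g)) alnz) r1 dsmul_done.
  have Wd : dm (dm g (iota_delta dK cc m)) (dbarstar g) = dsmul al (iota_delta dK cc m).
    by rewrite -(dsmulK' al (dm (dm g (iota_delta dK cc m)) (dbarstar g)) alnz) rd.
  have Wb : dbarstar g = dsmul al h'.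
    by rewrite -(dmul1x (dbarstar g)) -hg -dmulA W dmulscal.
  have Wc : dm (dbarstar g) g = dscal al by rewrite Wb dmulZl hg dsmul_done.
  set dl := iota_delta dK cc m in Wd.
  have gd : dm g dl = dm dl g.
    have : dsmul al (dm g dl) = dsmul al (dm dl g).
      transitivity (dm (dsmul al dl) g); last by rewrite dmulZl.
      by rewrite -Wd -dmulA Wc dmulscal.
    by move=> /(congr1 (dsmul al^-1)); rewrite !dsmulK.
  have hEg : Defs.inE qa qb f m g by apply: (commE w1 w4 g w4nz); rewrite -hdelta; exact gd.
  have hEh : Defs.inE qa qb f m h' by apply: (commE w1 w4 h' w4nz); rewrite -hdelta;
    exact: (inv_comm _ _ _ gh hg gd).
  exists g; split.
  + by split=> //; split; [exists h' | exists al].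
  + exists 1, 0; split; first by rewrite /normF expr1n expr0n /= mulr0 subr0 oner_neq0.
    by rewrite /= dmulfel10 /phi /= (NalphaE _ _ W) /normF expr1n expr0n /= mulr0 subr0 mul1r.
Qed.

End S.

Lemma intr_neq0_c0 (L : fieldType) : [pchar L] =i pred0 ->
  forall z : int, z != 0 -> (z%:~R : L) != 0.
Proof.
move=> /pcharf0P H [n|n] nz.
- by rewrite [_%:~R]/(n%:R) H; move: nz; apply: contra => /eqP ->.
- by rewrite NegzE mulrNz oppr_eq0 [_%:~R]/(n.+1%:R) H.
Qed.

Lemma ratr_neq0 (L : fieldType) : [pchar L] =i pred0 ->
  forall x : rat, x != 0 -> ratr (R:=L) x != 0.
Proof.
move=> hL x xnz; rewrite /ratr mulf_neq0 //.
- by apply: intr_neq0_c0 => //; rewrite numq_eq0.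
- by rewrite invr_neq0 //; apply: intr_neq0_c0 => //; apply: denq_neq0.
Qed.

Theorem lemma4p1 (a b : rat) (dF dM dK c : nat) (mu : quat rat) :
  a < 0 -> b < 0 ->
  squarefree dF -> squarefree dM -> squarefree dK ->
  (dM * dF = c ^ 2 * dK)%N ->
  qmul a b mu mu = qscal (- (dM%:R)) (qone rat) ->
  forall L : fieldType, [pchar L] =i pred0 ->
  let qa : L := ratr a in let qb : L := ratr b in let f : L := dF%:R in
  let m : quat L := qmap L mu in
  let phi (g : dq L) : dq L * L := (g, Nalpha qa qb f g) in
  (* the map is well defined into H_z *)
  (forall g, E0x qa qb f m g -> Hz qa qb f dK c m (phi g)) /\
  (* it is a group homomorphism on E_0^x *)
  (forall g g', E0x qa qb f m g -> E0x qa qb f m g' ->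
     E0x qa qb f m (dmul qa qb f g g') /\
     Nalpha qa qb f (dmul qa qb f g g') = Nalpha qa qb f g * Nalpha qa qb f g') /\
  (* it induces a well-defined injective map on E_0^x / F^x *)
  (forall g g', E0x qa qb f m g -> E0x qa qb f m g' ->
     (Hequiv qa qb f (phi g) (phi g') <->
      exists u v, normF f u v != 0 /\ g' = dmul qa qb f (fel u v) g)) /\
  (* which is surjective onto H_z *)
  (forall h, Hz qa qb f dK c m h -> exists g, E0x qa qb f m g /\ Hequiv qa qb f (phi g) h).
Proof.
case: mu => m0 x1 x2 x3.
move=> ha hb [hF _] [hM _] _ hc hmu L hL qa qb f m phi.
have dMpos : (0 : rat) < dM%:R by rewrite ltr0n.
have E0 := congr1 (@q0 _) hmu; have E1 := congr1 (@q1 _) hmu.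
have E2 := congr1 (@q2 _) hmu; have E3 := congr1 (@q3 _) hmu.
simpl in E0, E1, E2, E3.
have h0 : m0 = 0.
  case: (eqVneq m0 0) => // h0.
  have z1 : x1 = 0.
    apply: (@mul_eq0_nz _ (2 * m0)); first by rewrite mulf_neq0 // pnatr_eq0.
    by apply: (eq_comb E1); ring.
  have z2 : x2 = 0.
    apply: (@mul_eq0_nz _ (2 * m0)); first by rewrite mulf_neq0 // pnatr_eq0.
    by apply: (eq_comb E2); ring.
  have z3 : x3 = 0.
    apply: (@mul_eq0_nz _ (2 * m0)); first by rewrite mulf_neq0 // pnatr_eq0.
    by apply: (eq_comb E3); ring.
  rewrite z1 z2 z3 in E0.
  have : m0 * m0 = - dM%:R by apply: subr0_eq; apply: (eq_comb E0); ring.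
  move=> E; exfalso; nra.
have hnz : [|| x1 != 0, x2 != 0 | x3 != 0].
  case: (eqVneq x1 0) => [z1|] //; case: (eqVneq x2 0) => [z2|]; rewrite ?orbT //.
  case: (eqVneq x3 0) => [z3|]; rewrite ?orbT //.
  rewrite h0 z1 z2 z3 in E0.
  have : (dM%:R : rat) = 0 by apply: (eq_comb E0); ring.
  by move=> E; move: dMpos; rewrite E ltxx.
have hm : m = Quat 0 (ratr x1) (ratr x2) (ratr x3).
  by rewrite /m /qmap /= h0 /ratr /= mul0r.
have qanz : qa != 0 by apply: ratr_neq0 => //; rewrite ltr0_neq0.
have qbnz : qb != 0 by apply: ratr_neq0 => //; rewrite ltr0_neq0.
have /pcharf0P hL' := hL.
have fnz : f != 0 by rewrite /f hL' -lt0n.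
have twonz : (2 : L) != 0 by rewrite hL'.
have cnz : (c%:R : L) != 0 by rewrite hL' -lt0n; nia.
have mnz : [|| ratr (R:=L) x1 != 0, ratr (R:=L) x2 != 0 | ratr (R:=L) x3 != 0].
  by case/or3P: hnz => h; apply/or3P; [apply: Or31 | apply: Or32 | apply: Or33];
    apply: ratr_neq0.
have [w1 [w4 [w4nz hd]]] : exists w1 w4 : L, w4 != 0 /\
   iota_delta dK c m = @e L (ratr x1) (ratr x2) (ratr x3) w1 0 0 w4.
  rewrite hm /iota_delta; case: ifP => _.
  - exists 2^-1, (2^-1 * c%:R^-1); split; first by rewrite mulf_neq0 // invr_neq0.
    rewrite /iota_sqrtdK; dsolve.
  - exists 0, (c%:R^-1); split; first by rewrite invr_neq0.
    rewrite /iota_sqrtdK; dsolve.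
rewrite hm in hd *.
exact (main _ _ _ _ _ _ _ mnz qanz qbnz fnz twonz _ _ _ _ w4nz hd).
Qed.
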